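(* Let $G$ be a group. If the set $\{x\in G:x^3=1\}$ is $7$-large in $G$, then $G$ is $2$-Engel, i.e. $[x,y,y]=1$ for all $x,y\in G$.
   Context: $[x,y]=x^{-1}y^{-1}xy$ and $[x,y,z]=[[x,y],z]$. A subset $X\subseteq G$ is $k$-large in $G$ if the intersection of any $k$ left translates $g_1X\cap\dots\cap g_kX$ ($g_i\in G$) is non-empty. *)

(* Defs.v *)
From Stdlib Require Import Arith.

Record is_group (G : Type) (mul : G -> G -> G) (one : G) (inv : G -> G) : Prop := {
  grp_assoc : forall x y z, mul x (mul y z) = mul (mul x y) z;
  grp_mul1l : forall x, mul one x = x;
  grp_mul1r : forall x, mul x one = x;
  grp_mulVl : forall x, mul (inv x) x = one;
  grp_mulVr : forall x, mul x (inv x) = one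
}.

Definition gcomm {G : Type} (mul : G -> G -> G) (inv : G -> G) (x y : G) : G :=
  mul (mul (mul (inv x) (inv y)) x) y.

Definition gcomm3 {G : Type} (mul : G -> G -> G) (inv : G -> G) (x y z : G) : G :=
  gcomm mul inv (gcomm mul inv x y) z.

Definition k_large {G : Type} (mul : G -> G -> G) (X : G -> Prop) (k : nat) : Prop :=
  forall g : nat -> G, exists z : G,
    forall i, i < k -> exists x, X x /\ z = mul (g i) x.

Definition two_Engel {G : Type} (mul : G -> G -> G) (one : G) (inv : G -> G) : Prop :=
  forall x y : G, gcomm3 mul inv x y y = one.

(* Main.v *)
Require Import Defs.
From Stdlib Require Import List Bool Arith Lia.
Import ListNotations.

Inductive gexp : Type := GV (n : nat) | G1 | GM (e1 e2 : gexp) | GI (e : gexp).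

Definition letter := (nat * bool)%type.
Definition flip (l : letter) : letter := (fst l, negb (snd l)).

Fixpoint flat (e : gexp) : list letter :=
  match e with
  | GV n => [(n, false)]
  | G1 => []
  | GM a b => flat a ++ flat b
  | GI a => rev (map flip (flat a))
  end.

Definition red_push (st : list letter) (l : letter) : list letter :=
  match st with
  | [] => [l]
  | l' :: st' => if (Nat.eqb (fst l) (fst l') && Bool.eqb (snd l) (negb (snd l'))) then st' else l :: st
  end.

Definition reduce (w : list letter) : list letter := rev (fold_left red_push w []).

Definition gden {G : Type} (mul : G -> G -> G) (one : G) (inv : G -> G) (env : list G) :=
  fix gd (e : gexp) : G :=
  match e with
  | GV n => nth n env one
  | G1 => one
  | GM a b => mul (gd a) (gd b)
  | GI a => inv (gd a)
  end.

Definition lden {G : Type} (one : G) (inv : G -> G) (env : list G) (l : letter) : G :=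
  if snd l then inv (nth (fst l) env one) else nth (fst l) env one.

Definition wden {G : Type} (mul : G -> G -> G) (one : G) (inv : G -> G) (env : list G) :=
  fix wd (w : list letter) : G :=
  match w with
  | [] => one
  | l :: w' => mul (lden one inv env l) (wd w')
  end.

Lemma g_inv_unique (G : Type) (mul : G -> G -> G) (one : G) (inv : G -> G)
  (HG : is_group G mul one inv) (a b : G) : mul a b = one -> b = inv a.
Proof.
  intro H. destruct HG as [As M1l M1r MVl MVr].
  rewrite <- (M1l b). rewrite <- (MVl a). rewrite <- As. rewrite H. apply M1r.
Qed.

Lemma g_inv_mul (G : Type) (mul : G -> G -> G) (one : G) (inv : G -> G)
  (HG : is_group G mul one inv) (a b : G) : inv (mul a b) = mul (inv b) (inv a).
Proof.
  symmetry. apply (g_inv_unique G mul one inv HG).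
  destruct HG as [As M1l M1r MVl MVr].
  rewrite <- As. rewrite (As b). rewrite MVr. rewrite M1l. apply MVr.
Qed.

Lemma g_inv_inv (G : Type) (mul : G -> G -> G) (one : G) (inv : G -> G)
  (HG : is_group G mul one inv) (a : G) : inv (inv a) = a.
Proof.
  symmetry. apply (g_inv_unique G mul one inv HG). apply (grp_mulVl _ _ _ _ HG).
Qed.

Lemma wden_app (G : Type) (mul : G -> G -> G) (one : G) (inv : G -> G)
  (HG : is_group G mul one inv) (env : list G) (w1 w2 : list letter) :
  wden mul one inv env (w1 ++ w2) = mul (wden mul one inv env w1) (wden mul one inv env w2).
Proof.
  induction w1 as [|l w1 IH]; simpl.
  - symmetry. apply (grp_mul1l _ _ _ _ HG).
  - rewrite IH. apply (grp_assoc _ _ _ _ HG).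
Qed.

Lemma wden_inv (G : Type) (mul : G -> G -> G) (one : G) (inv : G -> G)
  (HG : is_group G mul one inv) (env : list G) (w : list letter) :
  wden mul one inv env (rev (map flip w)) = inv (wden mul one inv env w).
Proof.
  induction w as [|l w IH]; simpl.
  - apply (g_inv_unique G mul one inv HG). apply (grp_mul1l _ _ _ _ HG).
  - rewrite (wden_app G mul one inv HG). rewrite IH. simpl.
    rewrite (grp_mul1r _ _ _ _ HG). rewrite (g_inv_mul G mul one inv HG). f_equal.
    unfold lden, flip. destruct l as [n b]. simpl. destruct b; simpl.
    + symmetry. apply (g_inv_inv G mul one inv HG).
    + reflexivity.
Qed.

Lemma flat_ok (G : Type) (mul : G -> G -> G) (one : G) (inv : G -> G)
  (HG : is_group G mul one inv) (env : list G) (e : gexp) :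
  wden mul one inv env (flat e) = gden mul one inv env e.
Proof.
  induction e as [n| |a IHa b IHb|a IHa]; simpl.
  - unfold lden. simpl. apply (grp_mul1r _ _ _ _ HG).
  - reflexivity.
  - rewrite (wden_app G mul one inv HG). rewrite IHa, IHb. reflexivity.
  - rewrite (wden_inv G mul one inv HG). rewrite IHa. reflexivity.
Qed.

Definition sden {G : Type} (mul : G -> G -> G) (one : G) (inv : G -> G) (env : list G) (st : list letter) :=
  wden mul one inv env (rev st).

Lemma sden_push (G : Type) (mul : G -> G -> G) (one : G) (inv : G -> G)
  (HG : is_group G mul one inv) (env : list G) (st : list letter) (l : letter) :
  sden mul one inv env (red_push st l) = mul (sden mul one inv env st) (lden one inv env l).
Proof.
  assert (Hcons : forall l0 st0, sden mul one inv env (l0 :: st0) = mul (sden mul one inv env st0) (lden one inv env l0)).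
  { intros l0 st0. unfold sden. simpl. rewrite (wden_app G mul one inv HG). simpl.
    rewrite (grp_mul1r _ _ _ _ HG). reflexivity. }
  destruct st as [|l' st']; simpl.
  - apply Hcons.
  - destruct (Nat.eqb (fst l) (fst l') && Bool.eqb (snd l) (negb (snd l'))) eqn:E.
    + apply andb_true_iff in E. destruct E as [E1 E2].
      apply Nat.eqb_eq in E1. apply Bool.eqb_prop in E2.
      rewrite Hcons. rewrite <- (grp_assoc _ _ _ _ HG).
      assert (Hc : mul (lden one inv env l') (lden one inv env l) = one).
      { destruct l as [n b], l' as [n' b']. simpl in *. subst. unfold lden. simpl.
        destruct b'; simpl.
        - apply (grp_mulVl _ _ _ _ HG).
        - apply (grp_mulVr _ _ _ _ HG). }
      rewrite Hc. symmetry. apply (grp_mul1r _ _ _ _ HG).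
    + apply Hcons.
Qed.

Lemma fold_ok (G : Type) (mul : G -> G -> G) (one : G) (inv : G -> G)
  (HG : is_group G mul one inv) (env : list G) (w : list letter) : forall st,
  sden mul one inv env (fold_left red_push w st) = mul (sden mul one inv env st) (wden mul one inv env w).
Proof.
  induction w as [|l w IH]; intro st; simpl.
  - symmetry. apply (grp_mul1r _ _ _ _ HG).
  - rewrite IH. rewrite (sden_push G mul one inv HG). rewrite <- (grp_assoc _ _ _ _ HG). reflexivity.
Qed.

Lemma reduce_ok (G : Type) (mul : G -> G -> G) (one : G) (inv : G -> G)
  (HG : is_group G mul one inv) (env : list G) (w : list letter) :
  wden mul one inv env (reduce w) = wden mul one inv env w.
Proof.
  unfold reduce. pose proof (fold_ok G mul one inv HG env w []) as H.
  unfold sden in H. rewrite H. simpl. apply (grp_mul1l _ _ _ _ HG).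
Qed.

Lemma gden_eq (G : Type) (mul : G -> G -> G) (one : G) (inv : G -> G)
  (HG : is_group G mul one inv) (env : list G) (e1 e2 : gexp) :
  reduce (flat e1) = reduce (flat e2) -> gden mul one inv env e1 = gden mul one inv env e2.
Proof.
  intro H. rewrite <- (flat_ok G mul one inv HG env e1), <- (flat_ok G mul one inv HG env e2).
  rewrite <- (reduce_ok G mul one inv HG env (flat e1)), <- (reduce_ok G mul one inv HG env (flat e2)).
  rewrite H. reflexivity.
Qed.

Ltac list_index x l :=
  lazymatch l with
  | x :: _ => constr:(0)
  | _ :: ?l' => let n := list_index x l' in constr:(S n)
  end.

Ltac reify mul one inv env t :=
  lazymatch t with
  | mul ?a ?b =>
        let ea := reify mul one inv env a in let eb := reify mul one inv env b in constr:(GM ea eb)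
  | inv ?a =>
        let ea := reify mul one inv env a in constr:(GI ea)
  | one => constr:(G1)
  | _ => let n := list_index t env in constr:(GV n)
  end.

Ltac gsolve mul one inv HG env :=
  lazymatch goal with
  | |- ?l = ?r =>
      let el := reify mul one inv env l in
      let er := reify mul one inv env r in
      change (gden mul one inv env el = gden mul one inv env er);
      apply (gden_eq _ mul one inv HG env el er); vm_compute; reflexivity
  end.


Lemma lemL (G : Type) (mul : G -> G -> G) (one : G) (inv : G -> G)
  (HG : is_group G mul one inv) (p q : G)
  (Hq : (mul q (mul q q)) = one) (H1 : (mul (mul p q) (mul (mul p q) (mul p q))) = one) (H2 : (mul (mul (inv p) q) (mul (mul (inv p) q) (mul (inv p) q))) = one) :
  mul p (mul (inv q) (mul p q)) = mul (inv q) (mul p (mul q p)).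
Proof.
  transitivity (mul q (mul (inv p) (inv q))).
  - transitivity (mul p (mul (inv (mul (mul (inv p) q) (mul (mul (inv p) q) (mul (inv p) q)))) (mul (inv p) (mul q (mul (inv p) (mul (inv q) (mul q (mul q q)))))))). { gsolve mul one inv HG (p :: q :: nil). }
    rewrite H2, Hq. gsolve mul one inv HG (p :: q :: nil).
  - symmetry.
    transitivity (mul (inv q) (mul (mul (mul p q) (mul (mul p q) (mul p q))) (mul (inv q) (mul (inv p) (inv q))))). { gsolve mul one inv HG (p :: q :: nil). }
    rewrite H1.
    transitivity (mul q (mul (inv (mul q (mul q q))) (mul (inv p) (inv q)))). { gsolve mul one inv HG (p :: q :: nil). }
    rewrite Hq. gsolve mul one inv HG (p :: q :: nil).
Qed.

Lemma lemLam (G : Type) (mul : G -> G -> G) (one : G) (inv : G -> G)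
  (HG : is_group G mul one inv) (a b u : G)
  (Hab : mul a b = mul b a) (Hu : (mul u (mul u u)) = one) (Ha : (mul (mul a u) (mul (mul a u) (mul a u))) = one)
  (Hb : (mul (mul b u) (mul (mul b u) (mul b u))) = one) (Habu : (mul (mul (mul a b) u) (mul (mul (mul a b) u) (mul (mul a b) u))) = one) :
  mul b (mul (inv u) (mul a u)) = mul (inv u) (mul a (mul u b)).
Proof.
  assert (FA : (mul a (mul (mul u (mul a (inv u))) (mul (inv u) (mul a u)))) = one).
  { transitivity (mul a (mul u (mul a (mul u (mul (inv (mul u (mul u u))) (mul a u)))))). { gsolve mul one inv HG (a :: b :: u :: nil). }
    rewrite Hu. transitivity (mul (mul a u) (mul (mul a u) (mul a u))). { gsolve mul one inv HG (a :: b :: u :: nil). } exact Ha. }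
  assert (FB : (mul b (mul (mul u (mul b (inv u))) (mul (inv u) (mul b u)))) = one).
  { transitivity (mul b (mul u (mul b (mul u (mul (inv (mul u (mul u u))) (mul b u)))))). { gsolve mul one inv HG (a :: b :: u :: nil). }
    rewrite Hu. transitivity (mul (mul b u) (mul (mul b u) (mul b u))). { gsolve mul one inv HG (a :: b :: u :: nil). } exact Hb. }
  assert (FAB : (mul a (mul b (mul (mul u (mul a (inv u))) (mul (mul u (mul b (inv u))) (mul (mul (inv u) (mul a u)) (mul (inv u) (mul b u))))))) = one).
  { transitivity (mul (mul a b) (mul u (mul (mul a b) (mul u (mul (inv (mul u (mul u u))) (mul (mul a b) u)))))). { gsolve mul one inv HG (a :: b :: u :: nil). }
    rewrite Hu. transitivity (mul (mul (mul a b) u) (mul (mul (mul a b) u) (mul (mul a b) u))). { gsolve mul one inv HG (a :: b :: u :: nil). } exact Habu. }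
  assert (HT : (mul (inv (mul (inv u) (mul a u))) (mul (mul u (mul b (inv u))) (mul (mul (inv u) (mul a u)) (inv (mul u (mul b (inv u))))))) = one).
  { transitivity (mul (inv (mul a (mul (mul u (mul a (inv u))) (mul (inv u) (mul a u))))) (mul (inv b) (mul (inv (mul (mul a b) (inv (mul b a)))) (mul (mul a (mul b (mul (mul u (mul a (inv u))) (mul (mul u (mul b (inv u))) (mul (mul (inv u) (mul a u)) (mul (inv u) (mul b u))))))) (mul (inv (mul b (mul (mul u (mul b (inv u))) (mul (inv u) (mul b u))))) b))))). { gsolve mul one inv HG (a :: b :: u :: nil). }
    rewrite FA, FB, FAB, Hab. gsolve mul one inv HG (a :: b :: u :: nil). }
  assert (HT2 : (mul b (mul (mul u (mul a (inv u))) (mul (inv b) (inv (mul u (mul a (inv u))))))) = one).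
  { transitivity (mul (mul u (mul a (inv u))) (mul (inv (mul u (mul u u))) (mul u (mul (inv a) (mul (mul u (mul u u)) (mul (inv u) (mul b (mul (inv (mul u (mul u u))) (mul u (mul a (mul (mul u (mul u u)) (mul (inv u) (mul (inv b) (inv (mul u (mul a (inv u))))))))))))))))). { rewrite Hu. gsolve mul one inv HG (a :: b :: u :: nil). }
    transitivity (mul (mul u (mul a (inv u))) (mul (inv u) (mul (mul (inv (mul (inv u) (mul a u))) (mul (mul u (mul b (inv u))) (mul (mul (inv u) (mul a u)) (inv (mul u (mul b (inv u))))))) (mul u (inv (mul u (mul a (inv u)))))))). { gsolve mul one inv HG (a :: b :: u :: nil). }
    rewrite HT. gsolve mul one inv HG (a :: b :: u :: nil). }
  assert (HT3 : (mul b (mul (mul (inv u) (mul a u)) (mul (inv b) (inv (mul (inv u) (mul a u)))))) = one).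
  { transitivity (mul (inv (mul u (mul a (inv u)))) (mul (inv (mul b (mul (mul u (mul a (inv u))) (mul (inv b) (inv (mul u (mul a (inv u)))))))) (mul (inv a) (mul (inv (mul (mul b a) (inv (mul a b)))) (mul b (mul (mul a (mul (mul u (mul a (inv u))) (mul (inv u) (mul a u)))) (mul (inv b) (mul (inv (mul a (mul (mul u (mul a (inv u))) (mul (inv u) (mul a u))))) (mul a (mul u (mul a (inv u)))))))))))). { gsolve mul one inv HG (a :: b :: u :: nil). }
    rewrite FA, HT2, Hab. gsolve mul one inv HG (a :: b :: u :: nil). }
  transitivity (mul (mul b (mul (mul (inv u) (mul a u)) (mul (inv b) (inv (mul (inv u) (mul a u)))))) (mul (mul (inv u) (mul a u)) b)). { gsolve mul one inv HG (a :: b :: u :: nil). }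
  rewrite HT3. gsolve mul one inv HG (a :: b :: u :: nil).
Qed.

Lemma get_w (G : Type) (mul : G -> G -> G) (one : G) (inv : G -> G)
  (HG : is_group G mul one inv) (g z w : G) : z = mul g w -> w = mul (inv g) z.
Proof.
  intro H. rewrite H. rewrite (grp_assoc _ _ _ _ HG). rewrite (grp_mulVl _ _ _ _ HG).
  symmetry. apply (grp_mul1l _ _ _ _ HG).
Qed.

Theorem theorem4p3 (G : Type) (mul : G -> G -> G) (one : G) (inv : G -> G)
  (HG : is_group G mul one inv)
  (Hlarge : k_large mul (fun x => mul x (mul x x) = one) 7) :
  two_Engel mul one inv.
Proof.
  unfold two_Engel. intros x y.
  destruct (Hlarge (fun i => match i with
      | 0 => one | 1 => y | 2 => inv y | 3 => inv x
      | 4 => inv (mul y x) | 5 => inv (mul x y) | _ => inv (mul y (mul x y)) end)) as [z Hz].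
  assert (Hc0 : (mul z (mul z z)) = one).
  { destruct (Hz 0 ltac:(lia)) as [w [Hw Heq]]. simpl in Heq.
    rewrite (get_w G mul one inv HG _ _ _ Heq) in Hw.
    rewrite <- Hw. gsolve mul one inv HG (y :: x :: z :: nil). }
  assert (Hc1 : (mul (mul (inv y) z) (mul (mul (inv y) z) (mul (inv y) z))) = one).
  { destruct (Hz 1 ltac:(lia)) as [w [Hw Heq]]. simpl in Heq.
    rewrite (get_w G mul one inv HG _ _ _ Heq) in Hw.
    rewrite <- Hw. gsolve mul one inv HG (y :: x :: z :: nil). }
  assert (Hc2 : (mul (mul y z) (mul (mul y z) (mul y z))) = one).
  { destruct (Hz 2 ltac:(lia)) as [w [Hw Heq]]. simpl in Heq.
    rewrite (get_w G mul one inv HG _ _ _ Heq) in Hw.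
    rewrite <- Hw. gsolve mul one inv HG (y :: x :: z :: nil). }
  assert (Hc3 : (mul (mul x z) (mul (mul x z) (mul x z))) = one).
  { destruct (Hz 3 ltac:(lia)) as [w [Hw Heq]]. simpl in Heq.
    rewrite (get_w G mul one inv HG _ _ _ Heq) in Hw.
    rewrite <- Hw. gsolve mul one inv HG (y :: x :: z :: nil). }
  assert (Hc4 : (mul (mul y (mul x z)) (mul (mul y (mul x z)) (mul y (mul x z)))) = one).
  { destruct (Hz 4 ltac:(lia)) as [w [Hw Heq]]. simpl in Heq.
    rewrite (get_w G mul one inv HG _ _ _ Heq) in Hw.
    rewrite <- Hw. gsolve mul one inv HG (y :: x :: z :: nil). }
  assert (Hc5 : (mul (mul x (mul y z)) (mul (mul x (mul y z)) (mul x (mul y z)))) = one).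
  { destruct (Hz 5 ltac:(lia)) as [w [Hw Heq]]. simpl in Heq.
    rewrite (get_w G mul one inv HG _ _ _ Heq) in Hw.
    rewrite <- Hw. gsolve mul one inv HG (y :: x :: z :: nil). }
  assert (Hc6 : (mul (mul y (mul x (mul y z))) (mul (mul y (mul x (mul y z))) (mul y (mul x (mul y z))))) = one).
  { destruct (Hz 6 ltac:(lia)) as [w [Hw Heq]]. simpl in Heq.
    rewrite (get_w G mul one inv HG _ _ _ Heq) in Hw.
    rewrite <- Hw. gsolve mul one inv HG (y :: x :: z :: nil). }

  pose proof (lemL G mul one inv HG y z Hc0 Hc2 Hc1) as HL.
  assert (Hab : mul y (mul (inv z) (mul y z)) = mul (mul (inv z) (mul y z)) y).
  { transitivity (mul y (mul (inv z) (mul y z))). { gsolve mul one inv HG (y :: x :: z :: nil). } rewrite HL. gsolve mul one inv HG (y :: x :: z :: nil). }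
  assert (Hb : (mul (mul (mul (inv z) (mul y z)) (mul x z)) (mul (mul (mul (inv z) (mul y z)) (mul x z)) (mul (mul (inv z) (mul y z)) (mul x z)))) = one).
  { transitivity (mul (inv (mul x z)) (mul (mul (mul x (mul y z)) (mul (mul x (mul y z)) (mul x (mul y z)))) (mul x z))). { gsolve mul one inv HG (y :: x :: z :: nil). } rewrite Hc5. gsolve mul one inv HG (y :: x :: z :: nil). }
  assert (Habu : (mul (mul (mul y (mul (inv z) (mul y z))) (mul x z)) (mul (mul (mul y (mul (inv z) (mul y z))) (mul x z)) (mul (mul y (mul (inv z) (mul y z))) (mul x z)))) = one).
  { rewrite Hab. transitivity (mul (mul (inv z) (mul y z)) (mul (mul (mul y (mul x (mul y z))) (mul (mul y (mul x (mul y z))) (mul y (mul x (mul y z))))) (inv (mul (inv z) (mul y z))))). { gsolve mul one inv HG (y :: x :: z :: nil). } rewrite Hc6. gsolve mul one inv HG (y :: x :: z :: nil). }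
  assert (Ha : (mul (mul y (mul x z)) (mul (mul y (mul x z)) (mul y (mul x z)))) = one).
  { transitivity (mul (mul y (mul x z)) (mul (mul y (mul x z)) (mul y (mul x z)))). { gsolve mul one inv HG (y :: x :: z :: nil). } exact Hc4. }
  pose proof (lemLam G mul one inv HG y (mul (inv z) (mul y z)) (mul x z) Hab Hc3 Ha Hb Habu) as HLam.
  assert (HyY : mul y (mul (inv x) (mul y x)) = mul (mul (inv x) (mul y x)) y).
  { transitivity (mul z (mul (mul (mul (inv z) (mul y z)) (mul (inv (mul x z)) (mul y (mul x z)))) (inv z))). { gsolve mul one inv HG (y :: x :: z :: nil). }
    rewrite HLam. gsolve mul one inv HG (y :: x :: z :: nil). }
  unfold gcomm3, gcomm.
  transitivity (mul (inv y) (mul (mul (inv x) (mul y x)) (mul (inv (mul (mul (inv x) (mul y x)) y)) (mul (mul y (mul (inv x) (mul y x))) (mul (inv (mul (inv x) (mul y x))) y))))). { gsolve mul one inv HG (y :: x :: z :: nil). }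
  rewrite HyY. gsolve mul one inv HG (y :: x :: z :: nil).
Qed.
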